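(* Let $\Lambda$ be a connected row-finite $k$-graph with no sources, $\pi\Lambda$ its fundamental group at a fixed vertex, and $c:\Lambda\to\pi\Lambda$ a cocycle such that $\Lambda\times_c\pi\Lambda$ is isomorphic to the universal covering of $\Lambda$. Fix a descending chain $\cdots\lhd H_{n+1}\lhd H_n\lhd\cdots\lhd H_1:=\pi\Lambda$ of finite-index normal subgroups; let $G_n:=\pi\Lambda/H_n$, $q_n(gH_{n+1})=gH_n$, $c_n(\lambda):=c(\lambda)H_n$, $\Lambda_n:=\Lambda\times_{c_n}G_n$ and $p_n:\Lambda_{n+1}\to\Lambda_n$, $p_n(\lambda,g)=(\lambda,q_n(g))$. Then the $(k+1)$-graph $\mathrm{tower}(\Lambda_n,p_n)$ has no local periodicity if and only if the following holds: whenever $v\in\Lambda^0$ and $p\neq q\in\mathbb N^k$ satisfy $\sigma^p(x)=\sigma^q(x)$ for all $x\in v\Lambda^\infty$, there exist $x\in v\Lambda^\infty$, $l\in\mathbb N^k$ and $N\in\mathbb N$ such that $c_N(x(p,p+l))\neq c_N(x(q,q+l))$.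
   Context: An infinite path in a $k$-graph $\Lambda$ is a degree-preserving functor $x:\Omega_k\to\Lambda$, where $\Omega_k=\{(p,q)\in\mathbb N^k\times\mathbb N^k:p\le q\}$ with $d(p,q)=q-p$; $\Lambda^\infty$ is the set of infinite paths, $v\Lambda^\infty$ those with $x(0)=v$, and $\sigma^n(x)$ is the infinite path with $\sigma^n(x)(p,q)=x(p+n,q+n)$. A $k$-graph has no local periodicity if for every vertex $v$ and all $m\neq n\in\mathbb N^k$ there is $x\in v\Lambda^\infty$ with $\sigma^m(x)\neq\sigma^n(x)$. Skew product $\Lambda\times_cH$: paths $\Lambda^n\times H$ of degree $n$, $r(\lambda,g)=(r(\lambda),c(\lambda)g)$, $s(\lambda,g)=(s(\lambda),g)$, $(\mu,c(\nu)g)(\nu,g)=(\mu\nu,g)$. With $p_{n,m}:=p_n\circ\cdots\circ p_{m-1}$, the tower graph $\mathrm{tower}(\Lambda_n,p_n)$ is the $(k+1)$-graph with vertices $\bigsqcup_n\Lambda_n^0$ and morphisms triples $(n,j,\lambda)$, $n\ge1$, $j\ge0$, $\lambda\in\Lambda_{n+j}$, of degree $(d(\lambda),j)$, range $p_{n,n+j}(r(\lambda))\in\Lambda_n^0$, source $s(\lambda)\in\Lambda_{n+j}^0$, with $(n,j,\mu)(n+j,i,\lambda)=(n,j+i,\tilde\mu\lambda)$ where $\tilde\mu\in\Lambda_{n+j+i}$ is the unique lift of $\mu$ under $p_{n+j,n+j+i}$ with $s(\tilde\mu)=r(\lambda)$. *)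

(* Defs.v *)
From Stdlib Require Import ClassicalEpsilon Relations List.
From mathcomp Require Import all_boot.

Set Implicit Arguments.
Unset Strict Implicit.
Unset Printing Implicit Defensive.

Definition Nk (k : nat) := {ffun 'I_k -> nat}.
Definition zeroN (k : nat) : Nk k := [ffun => 0%N].
Definition addN (k : nat) (p q : Nk k) : Nk k := [ffun i => (p i + q i)%N].
Definition subN (k : nat) (p q : Nk k) : Nk k := [ffun i => (p i - q i)%N].
Definition leN (k : nat) (p q : Nk k) : bool := [forall i, p i <= q i].

(* (m, j) in N^(k+1): the first k coordinates are m, the last one is j *)
Definition extN (k : nat) (m : Nk k) (j : nat) : Nk k.+1 :=
  [ffun i : 'I_k.+1 => if unlift ord_max i is Some i' then m i' else j].

(* Composition is a total function, only meaningful on composable      *)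
(* pairs (src mu = rng nu).                                            *)
Record kdata (k : nat) := KData {
  Obj : Type;
  Mor : Type;
  rng : Mor -> Obj;
  src : Mor -> Obj;
  deg : Mor -> Nk k;
  comp : Mor -> Mor -> Mor;
  idm : Obj -> Mor }.
Arguments rng {k L} _ : rename.
Arguments src {k L} _ : rename.
Arguments deg {k L} _ : rename.
Arguments comp {k L} _ _ : rename.
Arguments idm {k L} _ : rename.

Definition is_kgraph (k : nat) (L : kdata k) : Prop :=
  ((exists f : Mor L -> nat, injective f) /\ (exists f : Obj L -> nat, injective f)) /\
  [/\ (forall v : Obj L, rng (idm v) = v /\ src (idm v) = v /\ deg (idm v) = zeroN k),
      (forall mu nu : Mor L, src mu = rng nu ->
          [/\ rng (comp mu nu) = rng mu, src (comp mu nu) = src nu &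
              deg (comp mu nu) = addN (deg mu) (deg nu)]),
      (forall l : Mor L, comp (idm (rng l)) l = l /\ comp l (idm (src l)) = l) &
      (forall l mu nu : Mor L, src l = rng mu -> src mu = rng nu ->
          comp (comp l mu) nu = comp l (comp mu nu))] /\
      (forall (l : Mor L) (m n : Nk k), deg l = addN m n ->
          exists! mn : Mor L * Mor L,
            [/\ src mn.1 = rng mn.2, deg mn.1 = m, deg mn.2 = n & l = comp mn.1 mn.2]).

Definition row_finite (k : nat) (L : kdata k) : Prop :=
  forall (v : Obj L) (n : Nk k), exists s : seq (Mor L),
    forall l : Mor L, rng l = v -> deg l = n -> In l s.

Definition no_sources (k : nat) (L : kdata k) : Prop :=
  forall (v : Obj L) (n : Nk k), exists l : Mor L, rng l = v /\ deg l = n.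

Definition connected (k : nat) (L : kdata k) : Prop :=
  forall u w : Obj L,
    clos_refl_sym_trans (Obj L) (fun a b => exists l : Mor L, rng l = a /\ src l = b) u w.

(* A walk is a list of (l, true) = l  or (l, false) = l^{-1}, written in
   composition order; walk_between w x y : w is a morphism of the
   fundamental groupoid from y to x. *)
Fixpoint walk_between (k : nat) (L : kdata k) (w : seq (Mor L * bool)) (x y : Obj L) : Prop :=
  match w with
  | [::] => x = y
  | e :: w' =>
      let a := if e.2 then rng e.1 else src e.1 in
      let z := if e.2 then src e.1 else rng e.1 in
      a = x /\ walk_between w' z y
  end.

Definition hgen (k : nat) (L : kdata k) (w w' : seq (Mor L * bool)) : Prop :=
  exists (w1 w2 : seq (Mor L * bool)),
    (exists (l : Mor L) (b : bool),
        w = w1 ++ (l, b) :: (l, ~~ b) :: w2 /\ w' = w1 ++ w2)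
 \/ (exists v : Obj L, exists b : bool,
        w = w1 ++ (idm v, b) :: w2 /\ w' = w1 ++ w2)
 \/ (exists mu nu : Mor L, src mu = rng nu /\
        w = w1 ++ (comp mu nu, true) :: w2 /\ w' = w1 ++ (mu, true) :: (nu, true) :: w2)
 \/ (exists mu nu : Mor L, src mu = rng nu /\
        w = w1 ++ (comp mu nu, false) :: w2 /\ w' = w1 ++ (nu, false) :: (mu, false) :: w2).

Definition hstep (k : nat) (L : kdata k) (w w' : seq (Mor L * bool)) : Prop :=
  exists x y : Obj L, walk_between w x y /\ walk_between w' x y /\ hgen w w'.

Definition homotopic (k : nat) (L : kdata k) := clos_refl_sym_trans _ (@hstep k L).

Definition simply_connected (k : nat) (L : kdata k) : Prop :=
  forall (v : Obj L) (w : seq (Mor L * bool)), walk_between w v v -> homotopic w [::].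

Record grp := Grp {
  gcar :> Type;
  gmul : gcar -> gcar -> gcar;
  gone : gcar;
  ginv : gcar -> gcar;
  gmulA : forall x y z, gmul x (gmul y z) = gmul (gmul x y) z;
  gmul1 : forall x, gmul gone x = x;
  gmulV : forall x, gmul (ginv x) x = gone }.

Definition normal_subgroup (G : grp) (H : G -> Prop) : Prop :=
  [/\ H (gone G),
      (forall x y, H x -> H y -> H (gmul x y)),
      (forall x, H x -> H (ginv x)) &
      (forall g x, H x -> H (gmul (gmul g x) (ginv g)))].

Definition finite_index (G : grp) (H : G -> Prop) : Prop :=
  exists s : seq G, forall g : G, exists t, In t s /\ H (gmul (ginv t) g).

Definition lcoset (G : grp) (H : G -> Prop) (g : G) : G -> Prop :=
  fun x => H (gmul (ginv g) x).

Definition Qt (G : grp) (H : G -> Prop) : Type :=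
  {S : G -> Prop | exists g : G, S = lcoset H g}.

Definition cosQ (G : grp) (H : G -> Prop) (g : G) : Qt H :=
  exist _ (lcoset H g) (ex_intro _ g erefl).

Definition repQ (G : grp) (H : G -> Prop) (A : Qt H) : G :=
  proj1_sig (constructive_indefinite_description _ (proj2_sig A)).

(* multiplication in G/H (well defined when H is normal) *)
Definition Qmul (G : grp) (H : G -> Prop) (A B : Qt H) : Qt H :=
  cosQ H (gmul (repQ A) (repQ B)).

Definition cocycle (k : nat) (L : kdata k) (G : grp) (c : Mor L -> G) : Prop :=
  forall mu nu : Mor L, src mu = rng nu -> c (comp mu nu) = gmul (c mu) (c nu).

(* Lambda x_c T : paths Lambda^n x T of degree n, r(l,g) = (r l, c(l) g),
   s(l,g) = (s l, g), (mu, c(nu) g)(nu, g) = (mu nu, g). *)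
Definition skew (k : nat) (L : kdata k) (T : Type) (mul : T -> T -> T) (c : Mor L -> T)
  : kdata k :=
  @KData k (Obj L * T)%type (Mor L * T)%type
    (fun x => (rng x.1, mul (c x.1) x.2))
    (fun x => (src x.1, x.2))
    (fun x => deg x.1)
    (fun x y => (comp x.1 y.1, y.2))
    (fun v => (idm v.1, v.2)).

(* The tower graph of a sequence (L n, p n), levels indexed from 0      *)
Section Tower.
Local Unset Implicit Arguments.
Variables (k : nat) (L : nat -> kdata k).
Variables (pO : forall n, Obj (L n.+1) -> Obj (L n))
          (pM : forall n, Mor (L n.+1) -> Mor (L n)).

Fixpoint iterO (n j : nat) : Obj (L (j + n)) -> Obj (L n) :=
  match j return Obj (L (j + n)) -> Obj (L n) with
  | 0 => fun x => x
  | j'.+1 => fun x => @iterO n j' (@pO (j' + n) x)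
  end.
Fixpoint iterM (n j : nat) : Mor (L (j + n)) -> Mor (L n) :=
  match j return Mor (L (j + n)) -> Mor (L n) with
  | 0 => fun x => x
  | j'.+1 => fun x => @iterM n j' (@pM (j' + n) x)
  end.

Definition towObj : Type := {n : nat & Obj (L n)}.
Definition towMor : Type := {n : nat & {j : nat & Mor (L (j + n))}}.

Definition tow_rng (t : towMor) : towObj :=
  existT _ (projT1 t) (iterO (projT1 t) (projT1 (projT2 t)) (rng (projT2 (projT2 t)))).
Definition tow_src (t : towMor) : towObj :=
  existT _ (projT1 (projT2 t) + projT1 t) (src (projT2 (projT2 t))).
Definition tow_deg (t : towMor) : Nk k.+1 :=
  extN (deg (projT2 (projT2 t))) (projT1 (projT2 t)).
Definition tow_idm (v : towObj) : towMor :=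
  existT _ (projT1 v) (existT _ 0 (idm (projT2 v))).

Lemma tow_lvl_eq (n j n' i : nat) : n' = j + n -> i + n' = (j + i) + n.
Proof. by move=> ->; rewrite addnA [i + j]addnC. Qed.

Definition castMor (a b : nat) (e : a = b) (x : Mor (L a)) : Mor (L b) :=
  eq_rect a (fun m => Mor (L m)) x b e.

(* the unique lift of mu : L_{n'} under p_{n', n'+i} with source r(l) *)
Definition tow_lift (n' i : nat) (mu : Mor (L n')) (l : Mor (L (i + n'))) : Mor (L (i + n')) :=
  epsilon (inhabits l) (fun nu => iterM n' i nu = mu /\ src nu = rng l).

(* (n, j, mu)(n + j, i, l) = (n, j + i, mu~ l) *)
Definition tow_comp (t u : towMor) : towMor :=
  match t, u with
  | existT n (existT j mu), existT n' (existT i l) =>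
      match @eqP _ n' (j + n) with
      | ReflectT e =>
          existT _ n (existT _ (j + i)
            (castMor _ _ (tow_lvl_eq n j n' i e)
               (comp (tow_lift n' i (castMor _ _ (esym e) mu) l) l)))
      | ReflectF _ => t
      end
  end.

Definition tower : kdata k.+1 :=
  @KData k.+1 towObj towMor tow_rng tow_src tow_deg tow_comp tow_idm.
End Tower.
Arguments tower {k L} pO pM.

(* x : Omega_k -> L, a degree preserving functor; x p q is x(p,q) for p <= q *)
Definition is_infpath (k : nat) (L : kdata k) (x : Nk k -> Nk k -> Mor L) : Prop :=
  [/\ (forall p, x p p = idm (rng (x p p))),
      (forall p q, leN p q ->
         [/\ rng (x p q) = rng (x p p), src (x p q) = rng (x q q) &
             deg (x p q) = subN q p]) &
      (forall p q r, leN p q -> leN q r -> x p r = comp (x p q) (x q r))].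

Definition ipvert (k : nat) (L : kdata k) (x : Nk k -> Nk k -> Mor L) : Obj L :=
  rng (x (zeroN k) (zeroN k)).

Definition shift (k : nat) (L : kdata k) (n : Nk k) (x : Nk k -> Nk k -> Mor L) :=
  fun p q => x (addN p n) (addN q n).

Definition infeq (k : nat) (L : kdata k) (x y : Nk k -> Nk k -> Mor L) : Prop :=
  forall p q, leN p q -> x p q = y p q.

Definition no_local_periodicity (k : nat) (L : kdata k) : Prop :=
  forall (v : Obj L) (m n : Nk k), m != n ->
    exists x, [/\ is_infpath x, ipvert x = v & ~ infeq (shift m x) (shift n x)].

(* The specific data of Lemma 5.4 (levels indexed from 0: H 0 = pi Lambda) *)
Section Lemma54Data.
Variables (k : nat) (L : kdata k) (G : grp) (c : Mor L -> G) (H : nat -> G -> Prop).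

Definition cN (n : nat) (l : Mor L) : Qt (H n) := cosQ (H n) (c l).
Definition LamN (n : nat) : kdata k := skew (@Qmul G (H n)) (cN n).
Definition qN (n : nat) (A : Qt (H n.+1)) : Qt (H n) := cosQ (H n) (repQ A).
Definition pON (n : nat) (x : Obj (LamN n.+1)) : Obj (LamN n) := (x.1, qN x.2).
Definition pMN (n : nat) (x : Mor (LamN n.+1)) : Mor (LamN n) := (x.1, qN x.2).
End Lemma54Data.

(* Main.v *)
Require Import Defs.
From mathcomp Require Import all_boot zify.
From Stdlib Require Import ClassicalEpsilon ProofIrrelevance FunctionalExtensionality PropExtensionality Eqdep_dec PeanoNat Classical.

Set Implicit Arguments.
Section Grp.
Variable G : grp.
Local Notation "x * y" := (gmul x y).
Local Notation "x ^-1" := (ginv x).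
Local Notation one := (gone G).

Lemma mulgV' (x : G) : x * x^-1 = one.
Proof.
have h : (x^-1)^-1 * x^-1 = one by apply: gmulV.
rewrite -[x * _]gmul1 -h -gmulA (gmulA x^-1) gmulV gmul1 //.
Qed.
Lemma mulg1' (x : G) : x * one = x.
Proof. by rewrite -(gmulV x) gmulA mulgV' gmul1. Qed.
Lemma mulKg' (x y : G) : x^-1 * (x * y) = y.
Proof. by rewrite gmulA gmulV gmul1. Qed.
Lemma mulKVg' (x y : G) : x * (x^-1 * y) = y.
Proof. by rewrite gmulA mulgV' gmul1. Qed.
Lemma invg_uniq (x y : G) : x * y = one -> x^-1 = y.
Proof. by move=> h; rewrite -[y](mulKg' x) h mulg1'. Qed.
Lemma invgK' (x : G) : (x^-1)^-1 = x.
Proof. by apply: invg_uniq; rewrite gmulV. Qed.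
Lemma invgM' (x y : G) : (x * y)^-1 = y^-1 * x^-1.
Proof. apply: invg_uniq; by rewrite -gmulA mulKVg' mulgV'. Qed.
Lemma invg1' : one^-1 = one.
Proof. by apply: invg_uniq; rewrite gmul1. Qed.

Variable H : G -> Prop.
Hypothesis hN : normal_subgroup H.

Lemma lcoset_eq (a b : G) : H (a^-1 * b) -> lcoset H a = lcoset H b.
Proof.
case: hN => h1 hM hV hC hab.
apply: functional_extensionality => x; apply: propositional_extensionality.
rewrite /lcoset; split=> hx.
- have := hM _ _ (hV _ hab) hx. by rewrite invgM' invgK' -gmulA mulKVg'.
- have := hM _ _ hab hx. by rewrite -gmulA mulKVg'.
Qed.

Lemma cosQ_eqP (a b : G) : cosQ H a = cosQ H b <-> H (a^-1 * b).
Proof.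
case: hN => h1 hM hV hC.
split.
- move=> e. have := f_equal (fun A : Qt H => proj1_sig A b) e.
  by rewrite /= /lcoset gmulV => ->.
- move=> hab. apply: eq_sig_hprop; first by move=> *; apply: proof_irrelevance.
  exact: lcoset_eq.
Qed.

Lemma cosQ_repQ (A : Qt H) : cosQ H (repQ A) = A.
Proof.
apply: eq_sig_hprop; first by move=> *; apply: proof_irrelevance.
rewrite /repQ /=.
case: (constructive_indefinite_description _ _) => g /= ->. by [].
Qed.

Lemma repQ_cos (a : G) : H (a^-1 * repQ (cosQ H a)).
Proof. by apply/cosQ_eqP; rewrite cosQ_repQ. Qed.

Lemma Qmul_cos (a b : G) : Qmul (cosQ H a) (cosQ H b) = cosQ H (a * b).
Proof.
rewrite /Qmul; apply/cosQ_eqP.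
have ha := repQ_cos a; have hb := repQ_cos b.
case: hN => h1 hM hV hC.
set a' := repQ _ in ha *; set b' := repQ _ in hb *.
have := hM _ _ (hC (b'^-1) _ (hV _ ha)) (hV _ hb).
rewrite !invgM' !invgK'.
by rewrite -!gmulA mulKVg'.
Qed.

Lemma cosQ_cancel (a b1 b2 : G) : cosQ H (a * b1) = cosQ H (a * b2) -> cosQ H b1 = cosQ H b2.
Proof. by move=> /cosQ_eqP; rewrite invgM' -gmulA mulKg' => /cosQ_eqP. Qed.

Lemma cosQ_invmul (a b g : G) :
  cosQ H (a^-1 * g) = cosQ H (b^-1 * g) -> cosQ H a = cosQ H b.
Proof.
move=> /cosQ_eqP h; apply/cosQ_eqP.
case: hN => h1 hM hV hC.
have := hV _ (hC a^-1 _ (hC g _ h)).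
by rewrite !invgM' !invgK' -!gmulA !mulKVg' gmulV mulg1'.
Qed.

End Grp.


Section NkL.
Variable k : nat.
Definition fstN (P : Nk k.+1) : Nk k := [ffun i => P (lift ord_max i)].
Definition lstN (P : Nk k.+1) : nat := P ord_max.

Lemma fst_ext (a : Nk k) j : fstN (extN a j) = a.
Proof. by apply/ffunP => i; rewrite !ffunE liftK. Qed.
Lemma lst_ext (a : Nk k) j : lstN (extN a j) = j.
Proof. by rewrite /lstN ffunE unlift_none. Qed.
Lemma ext_eta P : extN (fstN P) (lstN P) = P.
Proof.
apply/ffunP => i; rewrite ffunE.
by case: (unliftP ord_max i) => [j ->|->]; rewrite ?ffunE.
Qed.
Lemma ext_inj (a b : Nk k) s t : extN a s = extN b t -> a = b /\ s = t.
Proof. by move=> e; have := f_equal (@fstN) e; have := f_equal (@lstN) e; rewrite !fst_ext !lst_ext. Qed.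

Lemma fst_add P Q : fstN (addN P Q) = addN (fstN P) (fstN Q).
Proof. by apply/ffunP => i; rewrite !ffunE. Qed.
Lemma lst_add P Q : lstN (addN P Q) = lstN P + lstN Q.
Proof. by rewrite /lstN ffunE. Qed.
Lemma fst_sub P Q : fstN (subN P Q) = subN (fstN P) (fstN Q).
Proof. by apply/ffunP => i; rewrite !ffunE. Qed.
Lemma lst_sub P Q : lstN (subN P Q) = lstN P - lstN Q.
Proof. by rewrite /lstN ffunE. Qed.
Lemma fst_zero : fstN (zeroN k.+1) = zeroN k.
Proof. by apply/ffunP => i; rewrite !ffunE. Qed.
Lemma lst_zero : lstN (zeroN k.+1) = 0.
Proof. by rewrite /lstN ffunE. Qed.
Lemma ext_zero : extN (zeroN k) 0 = zeroN k.+1.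
Proof. by rewrite -fst_zero -lst_zero ext_eta. Qed.

Lemma leN_fl P Q : leN P Q = leN (fstN P) (fstN Q) && (lstN P <= lstN Q).
Proof.
apply/idP/idP.
- move/forallP => h; apply/andP; split; last exact: h.
  by apply/forallP => i; rewrite !ffunE.
- case/andP => /forallP h1 h2; apply/forallP => i.
  case: (unliftP ord_max i) => [j ->|->] //.
  by have := h1 j; rewrite !ffunE.
Qed.

Lemma leNP (p q : Nk k) : leN p q <-> forall i, p i <= q i.
Proof. by split => [/forallP|h]; last apply/forallP. Qed.
Lemma leNxx (p : Nk k) : leN p p.
Proof. by apply/leNP. Qed.
Lemma leN_trans {p q r : Nk k} : leN p q -> leN q r -> leN p r.
Proof. by move=> /leNP h1 /leNP h2; apply/leNP => i; apply: leq_trans (h1 i) (h2 i). Qed.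
Lemma leN_add2r (p q m : Nk k) : leN p q -> leN (addN p m) (addN q m).
Proof. by move=> /leNP h; apply/leNP => i; rewrite !ffunE leq_add2r. Qed.
Lemma leN0 (p : Nk k) : leN (zeroN k) p.
Proof. by apply/leNP => i; rewrite ffunE. Qed.
Lemma addNC (p q : Nk k) : addN p q = addN q p.
Proof. by apply/ffunP => i; rewrite !ffunE addnC. Qed.
Lemma add0N (p : Nk k) : addN (zeroN k) p = p.
Proof. by apply/ffunP => i; rewrite !ffunE. Qed.
Lemma subNN (p : Nk k) : subN p p = zeroN k.
Proof. by apply/ffunP => i; rewrite !ffunE subnn. Qed.
End NkL.


Section Tow.
Variables (k : nat) (L : kdata k) (G : grp) (c : Mor L -> G) (H : nat -> G -> Prop).
Hypothesis hL : is_kgraph L.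
Hypothesis hH : forall n, [/\ normal_subgroup (H n), finite_index (H n) &
                      forall g : G, H n.+1 g -> H n g].

Local Notation LN := (LamN c H).
Lemma hNs n : normal_subgroup (H n). Proof. by case: (hH n) => ? _ _. Qed.
Lemma hsub n g : H n.+1 g -> H n g. Proof. by case: (hH n) => _ _; apply. Qed.
Local Notation T := (tower (@pON k L G c H) (@pMN k L G c H)).
Local Notation itO := (iterO k LN (@pON k L G c H)).
Local Notation itM := (Defs.iterM k LN (@pMN k L G c H)).

Lemma iO_fst n j (z : Obj (LN (j + n))) : (itO n j z).1 = z.1.
Proof. by elim: j z => [|j IH] z //=; rewrite IH. Qed.
Lemma iM_fst n j (z : Mor (LN (j + n))) : (itM n j z).1 = z.1.
Proof. by elim: j z => [|j IH] z //=; rewrite IH. Qed.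
Lemma iOM_snd n j u l (A : Qt (H (j + n))) :
  (itO n j (u, A)).2 = (itM n j (l, A)).2.
Proof. by elim: j u l A => [|j IH] u l A //=; exact: (IH u l (qN A)). Qed.

Lemma iO_cos n j u (a : G) : itO n j (u, cosQ (H (j + n)) a) = (u, cosQ (H n) a).
Proof.
elim: j u a => [|j IH] u a //=.
rewrite /pON /qN /=.
have -> : cosQ (H (j + n)) (repQ (cosQ (H (j + n).+1) a)) = cosQ (H (j + n)) a.
  apply/(cosQ_eqP (hNs _)); apply: hsub.
  have := repQ_cos (hNs (j + n).+1) a.
  case: (hH (j + n).+1) => [[h1 hM hV hC] _ _] /hV.
  by rewrite invgM' invgK'.
exact: IH.
Qed.

Definition tfst (z : Mor T) : Mor L := (projT2 (projT2 z)).1.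
Definition tvert (o : Obj T) : Obj L := (projT2 o).1.
Definition tlvl (z : Mor T) : nat := projT1 z.
Definition tj (z : Mor T) : nat := projT1 (projT2 z).

Lemma tvert_rng (z : Mor T) : tvert (rng z) = rng (tfst z).
Proof. by case: z => n [j [l A]]; rewrite /tvert /= iO_fst. Qed.
Lemma tvert_src (z : Mor T) : tvert (src z) = src (tfst z).
Proof. by case: z => n [j [l A]]. Qed.
Lemma lvl_rng (z : Mor T) : projT1 (rng z) = tlvl z.
Proof. by case: z => n [j [l A]]. Qed.
Lemma lvl_src (z : Mor T) : projT1 (src z) = tj z + tlvl z.
Proof. by case: z => n [j [l A]]. Qed.
Lemma deg_tow (z : Mor T) : deg z = extN (deg (tfst z)) (tj z).
Proof. by case: z => n [j [l A]]. Qed.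

Lemma tow_mor_ext (z z' : Mor T) : tlvl z = tlvl z' -> tj z = tj z' ->
  tfst z = tfst z' -> src z = src z' -> z = z'.
Proof.
case: z => n [j [l A]]; case: z' => n' [j' [l' A']].
rewrite /tlvl /tj /tfst /= => en ej el; subst n' j' l' => /= es.
have := inj_pair2_eq_dec _ Nat.eq_dec _ _ _ _ es.
by case=> ->.
Qed.

Lemma castMor_fst a b (e : a = b) (z : Mor (LN a)) : (castMor k LN a b e z).1 = z.1.
Proof. by case: b / e. Qed.
Lemma castMor_src a b (e : a = b) (z : Mor (LN a)) :
  existT (fun N => Obj (LN N)) b (src (castMor k LN a b e z)) = existT _ a (src z).
Proof. by case: b / e. Qed.


Lemma kg_comp (mu nu : Mor L) : src mu = rng nu ->
  [/\ rng (Defs.comp mu nu) = rng mu, src (Defs.comp mu nu) = src nu &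
      deg (Defs.comp mu nu) = addN (deg mu) (deg nu)].
Proof. by case: hL => _ [[_ h _ _] _]; apply: h. Qed.
Lemma kg_id (v : Obj L) : rng (idm v) = v /\ src (idm v) = v /\ deg (idm v) = zeroN k.
Proof. by case: hL => _ [[h _ _ _] _]; apply: h. Qed.
Lemma kg_unit (l : Mor L) : Defs.comp (idm (rng l)) l = l /\ Defs.comp l (idm (src l)) = l.
Proof. by case: hL => _ [[_ _ h _] _]; apply: h. Qed.
Lemma kg_deg0 {l : Mor L} : deg l = zeroN k -> l = idm (rng l).
Proof.
move=> d0; case: hL => _ [_ hf].
have e : deg l = addN (zeroN k) (zeroN k).
  by rewrite d0; apply/ffunP => i; rewrite !ffunE.
case: (hf l _ _ e) => mn [_ uq].
have [h1 [h2 h3]] := kg_id (rng l); have [h1' [h2' h3']] := kg_id (src l).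
have [u1 u2] := kg_unit l.
have e1 := uq (idm (rng l), l) (And4 h2 h3 d0 (esym u1)).
have e2 := uq (l, idm (src l)) (And4 (esym h1') d0 h3' (esym u2)).
by have := esym e1; rewrite e2; case=> ->.
Qed.

Lemma tow_comp_props {z1 z2 : Mor T} : src z1 = rng z2 ->
  [/\ tlvl (Defs.comp z1 z2) = tlvl z1, tj (Defs.comp z1 z2) = tj z1 + tj z2,
      tfst (Defs.comp z1 z2) = Defs.comp (tfst z1) (tfst z2) & src (Defs.comp z1 z2) = src z2].
Proof.
case: z1 => n [j [m1 A]]; case: z2 => n' [i [l1 B]] /= e12.
have en : n' = j + n by have := f_equal (@projT1 _ _) e12.
subst n'.
have := inj_pair2_eq_dec _ Nat.eq_dec _ _ _ _ e12.
move: (iO_fst (j + n) i (rng l1, Qmul (cN c H (i + (j + n)) l1) B)).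
move: (iOM_snd (j + n) i (rng l1) m1 (Qmul (cN c H (i + (j + n)) l1) B)).
case: (itO _ _ _) => u C /= eC eu [esrc eA]; subst u C.
rewrite /Defs.comp /= /tow_comp.
case: eqP => // e.
have -> : e = erefl by apply: eq_irrelevance.
rewrite /tow_lift.
set nu := epsilon _ _.
have [hM hS] : itM (j + n) i nu = (m1, A) /\ src nu = rng ((l1, B) : Mor (LN (i + (j + n)))).
  refine (epsilon_spec (inhabits (l1, B)) (fun nu0 : Mor (LN (i + (j + n))) =>
     itM (j + n) i nu0 = (m1, A) /\ src nu0 = rng ((l1, B) : Mor (LN (i + (j + n))))) _).
  exists (m1, Qmul (cN c H (i + (j + n)) l1) B); split => /=; last by rewrite esrc.
  apply: injective_projections => /=; first by rewrite iM_fst.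
  by rewrite eA.
move: hM hS; case: nu => nu1 nu2 hM hS.
have e1 : nu1 = m1 by have := f_equal fst hM; rewrite iM_fst.
subst nu1.
have hs1 : src m1 = rng l1 by have := f_equal fst hS.
have [_ hsc _] := kg_comp m1 l1 hs1.
split => //.
- by rewrite /tfst /= castMor_fst.
- rewrite /= /tow_src /= castMor_src /=.
  by rewrite hsc.
Qed.


Lemma deg_tfst (z : Mor T) : deg (tfst z) = fstN (deg z).
Proof. by rewrite deg_tow fst_ext. Qed.
Lemma tj_deg (z : Mor T) : tj z = lstN (deg z).
Proof. by rewrite deg_tow lst_ext. Qed.

Section Ypath.
Variable y : Nk k.+1 -> Nk k.+1 -> Mor T.
Hypothesis hy : is_infpath y.
Hypothesis hy0 : projT1 (ipvert y) = 0.

Lemma y_rng {P Q} : leN P Q -> rng (y P Q) = rng (y P P).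
Proof. by case: hy => _ h _ /h []. Qed.
Lemma y_src {P Q} : leN P Q -> src (y P Q) = rng (y Q Q).
Proof. by case: hy => _ h _ /h []. Qed.
Lemma y_deg {P Q} : leN P Q -> deg (y P Q) = subN Q P.
Proof. by case: hy => _ h _ /h []. Qed.
Lemma y_comp {P Q R} : leN P Q -> leN Q R -> y P R = Defs.comp (y P Q) (y Q R).
Proof. by case: hy => _ _ h; apply: h. Qed.
Lemma y_srng {P Q R} : leN P Q -> leN Q R -> src (y P Q) = rng (y Q R).
Proof. by move=> h1 h2; rewrite y_src // y_rng. Qed.

Lemma y_tj {P Q} : leN P Q -> tj (y P Q) = lstN Q - lstN P.
Proof. by move=> h; rewrite tj_deg y_deg // lst_sub. Qed.

Lemma y_lvl {P Q} : leN P Q -> tlvl (y P Q) = lstN P.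
Proof.
move=> h; rewrite -lvl_rng y_rng //.
have h0 := leN0 P.
have := f_equal (@projT1 _ _) (y_src h0).
rewrite lvl_src y_tj // lst_zero subn0 -lvl_rng y_rng //.
by rewrite -/(ipvert y) hy0 addn0 => <-.
Qed.

Definition xof (a b : Nk k) : Mor L := tfst (y (extN a 0) (extN b 0)).

Lemma y_tfst {P Q} : leN P Q -> tfst (y P Q) = xof (fstN P) (fstN Q).
Proof.
rewrite -(ext_eta P) -(ext_eta Q) !fst_ext.
move: (fstN P) (lstN P) (fstN Q) (lstN Q) => a s b t.
rewrite leN_fl !fst_ext !lst_ext => /andP [hab hst].
set R0 := extN a 0; set S0 := extN b 0; set R := extN a s; set S := extN b t.
have hR0S0 : leN R0 S0 by rewrite leN_fl !fst_ext !lst_ext hab.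
have hS0S : leN S0 S by rewrite leN_fl !fst_ext !lst_ext leNxx.
have hR0R : leN R0 R by rewrite leN_fl !fst_ext !lst_ext leNxx.
have hRS : leN R S by rewrite leN_fl !fst_ext !lst_ext hab.
have e1 := y_comp hR0S0 hS0S.
have e2 := y_comp hR0R hRS.
have [_ _ f1 _] := tow_comp_props (y_srng hR0S0 hS0S).
have [_ _ f2 _] := tow_comp_props (y_srng hR0R hRS).
rewrite -e1 in f1; rewrite -e2 in f2.
(* vertical pieces are identities *)
have d1 : deg (tfst (y S0 S)) = zeroN k.
  by rewrite deg_tfst y_deg // fst_sub !fst_ext subNN.
have d2 : deg (tfst (y R0 R)) = zeroN k.
  by rewrite deg_tfst y_deg // fst_sub !fst_ext subNN.
have i1 := kg_deg0 d1; have i2 := kg_deg0 d2.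
have r1 : rng (tfst (y S0 S)) = src (xof a b).
  by rewrite -tvert_rng y_rng // -(y_src hR0S0) tvert_src.
have r2 : rng (tfst (y R S)) = rng (tfst (y R0 R)).
  rewrite -tvert_rng y_rng // -(y_src hR0R) tvert_src.
  by rewrite {1}i2; case: (kg_id (rng (tfst (y R0 R)))) => _ [-> _].
rewrite i1 r1 (proj2 (kg_unit _)) in f1.
rewrite i2 -r2 (proj1 (kg_unit _)) in f2.
by rewrite -f2 f1.
Qed.

Lemma xof_path : is_infpath xof /\ ipvert xof = tvert (ipvert y).
Proof.
have ext_le (a b : Nk k) : leN a b -> leN (extN a 0) (extN b 0).
  by move=> h; rewrite leN_fl !fst_ext !lst_ext h.
split; last by rewrite /ipvert /xof ext_zero -tvert_rng.
split.
- move=> p; apply: kg_deg0.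
  by rewrite deg_tfst y_deg ?ext_le ?leNxx // fst_sub fst_ext subNN.
- move=> p q hpq; have h := ext_le _ _ hpq; split.
  + by rewrite /xof -!tvert_rng y_rng.
  + by rewrite /xof -tvert_src -tvert_rng y_src.
  + by rewrite deg_tfst y_deg // fst_sub !fst_ext.
- move=> p q r hpq hqr.
  have h1 := ext_le _ _ hpq; have h2 := ext_le _ _ hqr.
  have [_ _ f _] := tow_comp_props (y_srng h1 h2).
  by rewrite /xof (y_comp h1 h2) f.
Qed.

Lemma y_shift_eq (p q : Nk k)
  (hper : forall x, is_infpath x -> ipvert x = tvert (ipvert y) -> infeq (shift p x) (shift q x))
  (hall : forall (l : Nk k) (N : nat),
     cN c H N (xof (zeroN k) (addN p l)) = cN c H N (xof (zeroN k) (addN q l))) :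
  infeq (shift (extN p 0) y) (shift (extN q 0) y).
Proof.
have [hx hxv] := xof_path.
have hpq := hper _ hx hxv.
move=> P Q hPQ; rewrite /shift.
set m := extN p 0; set m' := extN q 0.
have le1 : leN (addN P m) (addN Q m) by apply: leN_add2r.
have le2 : leN (addN P m') (addN Q m') by apply: leN_add2r.
have fm : fstN m = p by rewrite fst_ext.
have fm' : fstN m' = q by rewrite fst_ext.
have lm : lstN m = 0 by rewrite lst_ext.
have lm' : lstN m' = 0 by rewrite lst_ext.
move: hPQ; rewrite leN_fl => /andP [hf hl].
apply: tow_mor_ext.
- by rewrite !y_lvl // !lst_add lm lm'.
- by rewrite !y_tj // !lst_add lm lm'.
- by rewrite !y_tfst // !fst_add fm fm'; apply: hpq.
- rewrite !y_src //.
  set S := addN Q m; set S' := addN Q m'.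
  have eSt : lstN S' = lstN S by rewrite !lst_add lm lm'.
  set t := lstN S.
  have hZ : leN (extN (zeroN k) t) S by rewrite leN_fl fst_ext lst_ext leN0 leqnn.
  have hZ' : leN (extN (zeroN k) t) S' by rewrite leN_fl fst_ext lst_ext leN0 eSt leqnn.
  rewrite -(y_src hZ) -(y_src hZ').
  have er : rng (y (extN (zeroN k) t) S) = rng (y (extN (zeroN k) t) S') by rewrite !y_rng.
  have tf : tfst (y (extN (zeroN k) t) S) = xof (zeroN k) (addN p (fstN Q)).
    by rewrite y_tfst // fst_ext /S fst_add fm addNC.
  have tf' : tfst (y (extN (zeroN k) t) S') = xof (zeroN k) (addN q (fstN Q)).
    by rewrite y_tfst // fst_ext /S' fst_add fm' addNC.
  have lv := y_lvl hZ; have lv' := y_lvl hZ'.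
  have jj := y_tj hZ; have jj' := y_tj hZ'.
  rewrite lst_ext in lv lv' jj jj'; rewrite -/t subnn in jj; rewrite eSt -/t subnn in jj'.
  have hc0 := hall (fstN Q) t.
  have hsv : src (xof (zeroN k) (addN p (fstN Q))) = src (xof (zeroN k) (addN q (fstN Q))).
    have [_ h2 _] := hx.
    case: (h2 _ _ (leN0 (addN p (fstN Q)))) => _ -> _.
    case: (h2 _ _ (leN0 (addN q (fstN Q)))) => _ -> _.
    rewrite [addN p _]addNC [addN q _]addNC.
    by have := hpq (fstN Q) (fstN Q) (leNxx _); rewrite /shift => ->.
  move: (y _ S) (y _ S') er tf tf' lv lv' jj jj'.
  case=> n1 [j1 [l1 A1]]; case=> n2 [j2 [l2 A2]].
  rewrite /tlvl /tj /tfst /= => er tf1 tf2 e1 e2 e3 e4.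
  subst n1 n2 j1 j2 l1 l2.
  have := inj_pair2_eq_dec _ Nat.eq_dec _ _ _ _ er.
  move=> e5.
  have e6 : Qmul (cN c H t (xof (zeroN k) (addN p (fstN Q)))) A1 =
            Qmul (cN c H t (xof (zeroN k) (addN q (fstN Q)))) A2 := f_equal snd e5.
  move: e6; rewrite hc0 /Qmul.
  by move=> /(cosQ_cancel (hNs _)); rewrite !cosQ_repQ // => ->; rewrite /tow_src /= hsv.
Qed.

End Ypath.

Hypothesis hc : cocycle c.

Lemma c_idm (v : Obj L) : c (idm v) = gone G.
Proof.
have [h1 [h2 _]] := kg_id v.
have e : src (idm v) = rng (idm v) by rewrite h1 h2.
have := hc _ _ e; rewrite (_ : Defs.comp (idm v) (idm v) = idm v); last first.
  by have := proj1 (kg_unit (idm v)); rewrite h1.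
move=> h; have := f_equal (gmul (ginv (c (idm v)))) h.
by rewrite mulKg' gmulV.
Qed.

Lemma Hle N M g : N <= M -> H M g -> H N g.
Proof.
move=> /subnK <-; elim: (M - N) => [|d IH] //= h.
by apply: IH; apply: hsub; rewrite addSn in h.
Qed.

Lemma cos_down N M (z : G) : N <= M ->
  cosQ (H N) (repQ (cosQ (H M) z)) = cosQ (H N) z.
Proof.
move=> hNM; apply/(cosQ_eqP (hNs _)).
have := repQ_cos (hNs M) z.
case: (hNs M) => h1 hM hV hC /hV.
rewrite invgM' invgK' => h.
exact: (Hle _ hNM h).
Qed.

Lemma lvl_eqT N1 N2 (e : N1 = N2) (v : Obj L) (a : G) :
  existT (fun N => Obj (LN N)) N1 (v, cosQ (H N1) a) = existT _ N2 (v, cosQ (H N2) a).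
Proof. by subst. Qed.

Lemma tfst_idm (o : Obj T) : tfst (idm o) = idm (tvert o).
Proof. by case: o => N [u A]. Qed.

Section Build.
Variable x : Nk k -> Nk k -> Mor L.
Hypothesis hx : is_infpath x.
Variables (n : nat) (g : G).

Definition zq (b : Nk k) : G := gmul (ginv (c (x (zeroN k) b))) g.

Definition yb (P Q : Nk k.+1) : Mor T :=
  existT (fun n0 => {j : nat & Mor (LN (j + n0))}) (n + lstN P)
    (existT (fun j => Mor (LN (j + (n + lstN P)))) (lstN Q - lstN P)
       ((x (fstN P) (fstN Q), cosQ (H ((lstN Q - lstN P) + (n + lstN P))) (zq (fstN Q)))
          : Mor (LN ((lstN Q - lstN P) + (n + lstN P))))).

Lemma x_idm a : x a a = idm (rng (x a a)).
Proof. by case: hx => h _ _. Qed.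
Lemma cx_aa a : c (x a a) = gone G.
Proof. by rewrite x_idm c_idm. Qed.
Lemma x_rng {a b} : leN a b -> rng (x a b) = rng (x a a).
Proof. by case: hx => _ h _ /h []. Qed.
Lemma x_src {a b} : leN a b -> src (x a b) = rng (x b b).
Proof. by case: hx => _ h _ /h []. Qed.
Lemma x_deg {a b} : leN a b -> deg (x a b) = subN b a.
Proof. by case: hx => _ h _ /h []. Qed.
Lemma x_comp {a b d} : leN a b -> leN b d -> x a d = Defs.comp (x a b) (x b d).
Proof. by case: hx => _ _ h; apply: h. Qed.
Lemma cx_comp {a b} : leN a b -> c (x (zeroN k) b) = gmul (c (x (zeroN k) a)) (c (x a b)).
Proof.
move=> hab; rewrite (x_comp (leN0 a) hab); apply: hc.
by rewrite x_src ?leN0 // x_rng.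
Qed.

Lemma yb_rng {P Q} : leN P Q -> rng (yb P Q) =
  existT (fun N => Obj (LN N)) (n + lstN P)
    (rng (x (fstN P) (fstN P)), cosQ (H (n + lstN P)) (zq (fstN P))).
Proof.
rewrite leN_fl => /andP [hf hl].
rewrite /= /tow_rng /=; congr (existT _ _ _).
rewrite /cN (Qmul_cos (hNs _)) (iO_cos (n + lstN P) (lstN Q - lstN P)) x_rng //; congr (_, _).
rewrite /zq (cx_comp hf) invgM' -!gmulA mulKVg' //.
Qed.

Lemma yb_src {P Q} : leN P Q -> src (yb P Q) = rng (yb Q Q).
Proof.
rewrite leN_fl => /andP [hf hl].
rewrite (yb_rng (leNxx Q)) /= /tow_src /= (x_src hf); apply: lvl_eqT.
lia.
Qed.

Lemma yb_path : is_infpath yb.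
Proof.
split.
- move=> P; apply: tow_mor_ext.
  + by [].
  + by rewrite /tj /= subnn.
  + by rewrite tfst_idm tvert_rng /tfst /= -x_idm.
  + rewrite (yb_rng (leNxx P)) /= /tow_src /=.
    have hs : src (x (fstN P) (fstN P)) = rng (x (fstN P) (fstN P)).
      by rewrite {1}x_idm; case: (kg_id (rng (x (fstN P) (fstN P)))) => _ [-> _].
    rewrite hs (proj1 (proj2 (kg_id _))); apply: lvl_eqT; lia.
- move=> P Q hPQ; split.
  + by rewrite !yb_rng // leNxx.
  + exact: yb_src.
  + move: hPQ; rewrite leN_fl => /andP [hf hl].
    by rewrite /= /tow_deg /= (x_deg hf) -fst_sub -lst_sub ext_eta.
- move=> P Q R hPQ hQR.
  have e : src (yb P Q) = rng (yb Q R) by rewrite (yb_src hPQ) (yb_rng hQR) (yb_rng (leNxx Q)).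
  have [t1 t2 t3 t4] := tow_comp_props e.
  move: hPQ hQR; rewrite !leN_fl => /andP [hf1 hl1] /andP [hf2 hl2].
  have hf3 := leN_trans hf1 hf2.
  apply: tow_mor_ext; rewrite ?t1 ?t2 ?t3 ?t4.
  + by [].
  + rewrite /tj /=; lia.
  + by rewrite /tfst /= (x_comp hf1 hf2).
  + rewrite /= /tow_src /= (x_src hf3) (x_src hf2); apply: lvl_eqT; lia.
Qed.

Lemma yb_vert : ipvert yb = existT (fun N => Obj (LN N)) n (rng (x (zeroN k) (zeroN k)), cosQ (H n) g).
Proof.
rewrite /ipvert (yb_rng (leNxx _)) fst_zero lst_zero.
rewrite /zq cx_aa invg1' gmul1; apply: lvl_eqT; lia.
Qed.

Lemma yb_D1 (m m' : Nk k.+1) : lstN m != lstN m' -> ~ infeq (shift m yb) (shift m' yb).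
Proof.
move=> hne hinf; have := hinf (zeroN _) (zeroN _) (leNxx _).
rewrite /shift !add0N => /(f_equal tlvl); rewrite /tlvl /= => /eqP.
by rewrite eqn_add2l (negbTE hne).
Qed.

Lemma yb_D2 (m m' : Nk k.+1) : infeq (shift m yb) (shift m' yb) ->
  infeq (shift (fstN m) x) (shift (fstN m') x).
Proof.
move=> hinf p0 q0 hle.
have hle' : leN (extN p0 0) (extN q0 0) by rewrite leN_fl !fst_ext !lst_ext hle.
have := hinf _ _ hle'; rewrite /shift => /(f_equal tfst); rewrite /tfst /=.
by rewrite !fst_add !fst_ext.
Qed.

Lemma yb_D3 (m m' : Nk k.+1) (l : Nk k) (N : nat) :
  cN c H N (x (zeroN k) (addN (fstN m) l)) <> cN c H N (x (zeroN k) (addN (fstN m') l)) ->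
  ~ infeq (shift m yb) (shift m' yb).
Proof.
move=> hne hinf; apply: hne.
set R0 := extN l N.
have := hinf R0 R0 (leNxx _); rewrite /shift.
move/(f_equal (fun z : Mor T => cosQ (H N) (repQ (projT2 (src z)).2))).
rewrite /= !cos_down; last 2 first.
- rewrite lst_add lst_ext; lia.
- rewrite lst_add lst_ext; lia.
rewrite /zq !fst_add !fst_ext [addN l _]addNC [addN l (fstN m')]addNC.
exact: cosQ_invmul (hNs _) _ _ _.
Qed.

End Build.

End Tow.

Unset Implicit Arguments.

Theorem lemma5p4 (k : nat) (L : kdata k) (G : grp) (c : Mor L -> G)
  (H : nat -> G -> Prop)
  (hL : is_kgraph L) (hconn : connected L) (hrf : row_finite L) (hns : no_sources L)
  (hc : cocycle c)
  (huniv : connected (skew (@gmul G) c) /\ simply_connected (skew (@gmul G) c))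
  (hH0 : forall g : G, H 0 g)
  (hH : forall n, [/\ normal_subgroup (H n), finite_index (H n) &
                      forall g : G, H n.+1 g -> H n g]) :
  no_local_periodicity (tower (@pON k L G c H) (@pMN k L G c H))
  <->
  (forall (v : Obj L) (p q : Nk k), p != q ->
     (forall x, is_infpath x -> ipvert x = v -> infeq (shift p x) (shift q x)) ->
     exists x (l : Nk k) (N : nat),
       [/\ is_infpath x, ipvert x = v &
           cN c H N (x (zeroN k) (addN p l)) <> cN c H N (x (zeroN k) (addN q l))]).
Proof.
split.
- move=> hnlp v p q hpq hper; apply: NNPP => hno.
  pose w : Obj (tower (@pON k L G c H) (@pMN k L G c H)) :=
    existT _ 0 (v, cosQ (H 0) (gone G)).
  have hm : extN p 0 != extN q 0.
    apply/negP => /eqP /ext_inj [e _]; by rewrite e eqxx in hpq.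
  case: (hnlp w _ _ hm) => y [hy hyv hne]; apply: hne.
  have hy0 : projT1 (ipvert y) = 0 by rewrite hyv.
  have hyv' : tvert (ipvert y) = v by rewrite hyv.
  have [hx hxv] := xof_path hL hy.
  apply: (y_shift_eq hL hH hy hy0).
  + by rewrite hyv'.
  + move=> l N; apply: NNPP => hneq; apply: hno.
    by exists (xof y), l, N; split => //; rewrite hxv.
- move=> hR w m m' hmm'.
  have exists_path : forall u : Obj L, exists x : Nk k -> Nk k -> Mor L, is_infpath x /\ ipvert x = u.
    move=> u; apply: NNPP => hno.
    case: (posnP k) => [k0|kpos].
    + apply: hno; exists (fun _ _ : Nk k => idm u).
      have [h1 [h2 h3]] := kg_id hL u.
      have [u1 _] := kg_unit hL (idm u).
      split => //; split.
      * by move=> p; rewrite h1.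
      * move=> p q _; split; rewrite ?h1 ?h2 //.
        by rewrite h3; apply/ffunP => i; have := ltn_ord i; rewrite {2}k0.
      * by move=> p q r _ _; rewrite -{1}u1 h1.
    + have hpq : zeroN k != [ffun => 1].
        apply/eqP => /(f_equal (fun f : Nk k => f (Ordinal kpos))).
        by rewrite !ffunE.
      have [x [l [N [hx hxv _]]]] :=
        hR u _ _ hpq (fun x hx hv => False_ind _ (hno (ex_intro _ x (conj hx hv)))).
      by apply: hno; exists x.
  case: w => n [u g0].
  case: (eqVneq (lstN m) (lstN m')) => hl; last first.
    have [x [hx hxv]] := exists_path u.
    exists (yb L G c H x n (repQ g0)); split.
    + exact: yb_path.
    + rewrite (yb_vert H hL hH hc hx); move: hxv; rewrite /ipvert => ->; by rewrite cosQ_repQ // hNs.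
    + exact: yb_D1.
  have hf : fstN m != fstN m'.
    apply/negP => /eqP hf; move/negP: hmm'; apply.
    by rewrite -(ext_eta m) -(ext_eta m') hf hl.
  case: (classic (exists x, [/\ is_infpath x, ipvert x = u &
           ~ infeq (shift (fstN m) x) (shift (fstN m') x)])).
  + case=> x [hx hxv hni].
    exists (yb L G c H x n (repQ g0)); split.
    * exact: yb_path.
    * rewrite (yb_vert H hL hH hc hx); move: hxv; rewrite /ipvert => ->; by rewrite cosQ_repQ // hNs.
    * by move/yb_D2.
  + move=> hall.
    have hall' : forall x, is_infpath x -> ipvert x = u ->
        infeq (shift (fstN m) x) (shift (fstN m') x).
      move=> x hx hxv; apply: NNPP => hni; apply: hall; by exists x.
    have [x [l [N [hx hxv hneq]]]] := hR u _ _ hf hall'.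
    exists (yb L G c H x n (repQ g0)); split.
    * exact: yb_path.
    * rewrite (yb_vert H hL hH hc hx); move: hxv; rewrite /ipvert => ->; by rewrite cosQ_repQ // hNs.
    * exact: (yb_D3 hH l hneq).
Qed.
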